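(* For every $d\geq 1$, $m(\ell_2^d)=d+1$, where $\ell_2^d$ is $\mathbb{R}^d$ with the Euclidean norm.
   Context: For a set $S$ in a normed space, its midpoint set is $M(S)=\{\tfrac12(x+y): x,y\in S,\ x\neq y\}$. A set $S$ is an M-set if every vector in $M(S)$ has norm exactly $1$ and every vector in $S$ has norm strictly greater than $1$. $m(X)$ denotes the largest cardinality of an M-set in the normed space $X$ if such a largest finite cardinality exists, and $m(X)=\infty$ otherwise. *)

(* Defs.v *)
(* Euclidean space R^d modelled as functions nat -> R supported on {0,...,d-1}. *)
From Stdlib Require Import Reals List.
Open Scope R_scope.

Definition in_Rd (d : nat) (x : nat -> R) : Prop := forall i, (d <= i)%nat -> x i = 0.

Fixpoint sumsq (d : nat) (x : nat -> R) : R :=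
  match d with
  | O => 0
  | S n => sumsq n x + x n * x n
  end.

Definition norm2 (d : nat) (x : nat -> R) : R := sqrt (sumsq d x).

Definition midpoint (x y : nat -> R) : nat -> R := fun i => (x i + y i) / 2.

Definition is_Mset (d : nat) (S : (nat -> R) -> Prop) : Prop :=
  (forall x, S x -> in_Rd d x) /\
  (forall x y, S x -> S y -> x <> y -> norm2 d (midpoint x y) = 1) /\
  (forall x, S x -> norm2 d x > 1).

(* Main.v *)
Require Import Defs.
From Stdlib Require Import Reals List Lra Lia Psatz Classical.
Open Scope R_scope.

Fixpoint fsum (n : nat) (f : nat -> R) : R :=
  match n with O => 0 | S m => fsum m f + f m end.

Lemma sumsq_fsum d x : sumsq d x = fsum d (fun j => x j * x j).
Proof. induction d; simpl; [reflexivity| rewrite IHd; reflexivity]. Qed.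

Lemma fsum_ext n f g : (forall i, (i < n)%nat -> f i = g i) -> fsum n f = fsum n g.
Proof. induction n; intros H; simpl; [reflexivity|].
  rewrite IHn by (intros; apply H; lia). rewrite H by lia. reflexivity. Qed.

Lemma fsum_plus n f g : fsum n (fun i => f i + g i) = fsum n f + fsum n g.
Proof. induction n; simpl; [lra| rewrite IHn; lra]. Qed.

Lemma fsum_scal n c f : fsum n (fun i => c * f i) = c * fsum n f.
Proof. induction n; simpl; [lra| rewrite IHn; lra]. Qed.

Lemma fsum_0 n f : (forall i, (i < n)%nat -> f i = 0) -> fsum n f = 0.
Proof. induction n; intros H; simpl; [reflexivity|].
  rewrite IHn by (intros; apply H; lia). rewrite H by lia. lra. Qed.

Lemma fsum_skip n p F : (p <= n)%nat ->
  fsum (S n) F = fsum n (fun i => F (if (i <? p)%nat then i else S i)) + F p.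
Proof.
  induction n; intros Hp.
  - assert (p = 0%nat) by lia; subst; simpl; lra.
  - destruct (Nat.eq_dec p (S n)) as [->|Hne].
    + change (fsum (S (S n)) F) with (fsum (S n) F + F (S n)).
      f_equal. apply fsum_ext. intros i Hi.
      assert (E: (i <? S n)%nat = true) by (apply Nat.ltb_lt; lia). rewrite E. reflexivity.
    + change (fsum (S (S n)) F) with (fsum (S n) F + F (S n)).
      rewrite IHn by lia. cbn [fsum].
      assert (E: (n <? p)%nat = false) by (apply Nat.ltb_ge; lia). rewrite E. lra.
Qed.

Lemma fsum_delta n p h e : (p < n)%nat ->
  fsum n (fun k => h k + (if (p =? k)%nat then e else 0)) = fsum n h + e.
Proof.
  induction n; intros Hp; [lia|].
  destruct (Nat.eq_dec p n) as [->|Hne].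
  - cbn [fsum]. rewrite Nat.eqb_refl.
    rewrite (fsum_ext n _ h). lra. intros i Hi.
    assert (E: (n =? i)%nat = false) by (apply Nat.eqb_neq; lia). rewrite E. lra.
  - cbn [fsum]. rewrite IHn by lia.
    assert (E: (p =? n)%nat = false) by (apply Nat.eqb_neq; lia). rewrite E. lra.
Qed.

Lemma fsum_swap n m F :
  fsum n (fun i => fsum m (fun j => F i j)) = fsum m (fun j => fsum n (fun i => F i j)).
Proof.
  induction n; simpl.
  - symmetry. apply fsum_0. reflexivity.
  - rewrite IHn. rewrite <- fsum_plus. reflexivity.
Qed.

Lemma fsum_nonneg n f : (forall i, (i < n)%nat -> 0 <= f i) -> 0 <= fsum n f.
Proof. induction n; intros H; simpl; [lra|].
  assert (0 <= fsum n f) by (apply IHn; intros; apply H; lia).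
  assert (0 <= f n) by (apply H; lia). lra. Qed.

Lemma fsum_pos n f p : (forall i, (i < n)%nat -> 0 <= f i) -> (p < n)%nat -> 0 < f p ->
  0 < fsum n f.
Proof. induction n; intros H Hp Hf; [lia|]. simpl.
  destruct (Nat.eq_dec p n) as [->|Hne].
  - assert (0 <= fsum n f) by (apply fsum_nonneg; intros; apply H; lia). lra.
  - assert (0 < fsum n f) by (apply IHn; [intros; apply H; lia | lia | exact Hf]).
    assert (0 <= f n) by (apply H; lia). lra.
Qed.

Lemma fsum_mul n f g : fsum n f * fsum n g = fsum n (fun i => fsum n (fun k => f i * g k)).
Proof.
  transitivity (fsum n (fun i => f i * fsum n g)).
  - rewrite Rmult_comm, <- fsum_scal. apply fsum_ext. intros. ring.
  - apply fsum_ext. intros i _. rewrite <- fsum_scal. reflexivity.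
Qed.

Definition sig_ (p i : nat) : nat := if (i <? p)%nat then i else S i.

Lemma dep : forall d k (v : nat -> nat -> R), (d < k)%nat ->
  (forall i j, (i < k)%nat -> (d <= j)%nat -> v i j = 0) ->
  exists lam, (exists i, (i < k)%nat /\ lam i <> 0) /\
    forall j, fsum k (fun i => lam i * v i j) = 0.
Proof.
  induction d as [|d IH]; intros k v Hk Hv.
  - exists (fun _ => 1). split. exists 0%nat. split; [lia|lra].
    intros j. apply fsum_0. intros i Hi. rewrite Hv by lia. ring.
  - destruct (classic (exists p, (p < k)%nat /\ v p d <> 0)) as [[p [Hp Hpd]]|Hno].
    + destruct k as [|k]; [lia|].
      set (c := fun i => v (sig_ p i) d / v p d).
      set (w := fun i j => v (sig_ p i) j - c i * v p j).
      assert (Hsig : forall i, (i < k)%nat -> (sig_ p i < S k)%nat).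
      { intros i Hi. unfold sig_. destruct (i <? p)%nat; lia. }
      destruct (IH k w ltac:(lia)) as [mu [[q [Hq Hmu]] Hs]].
      { intros i j Hi Hj. unfold w.
        destruct (Nat.eq_dec j d) as [->|Hjd].
        - unfold c. field. exact Hpd.
        - rewrite (Hv (sig_ p i) j) by (auto; lia). rewrite (Hv p j) by lia. ring. }
      set (L := - fsum k (fun i => mu i * c i)).
      exists (fun i => if (i =? p)%nat then L else mu (if (i <? p)%nat then i else pred i)).
      assert (Hlam : forall i, (if (sig_ p i =? p)%nat then L
                 else mu (if (sig_ p i <? p)%nat then sig_ p i else pred (sig_ p i))) = mu i).
      { intros i. unfold sig_. destruct (Nat.ltb_spec i p).
        - assert (E: (i =? p)%nat = false) by (apply Nat.eqb_neq; lia). rewrite E.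
          assert (E2: (i <? p)%nat = true) by (apply Nat.ltb_lt; lia). rewrite E2. reflexivity.
        - assert (E: (S i =? p)%nat = false) by (apply Nat.eqb_neq; lia). rewrite E.
          assert (E2: (S i <? p)%nat = false) by (apply Nat.ltb_ge; lia). rewrite E2. reflexivity. }
      split.
      * exists (sig_ p q). split; [apply Hsig; exact Hq|]. rewrite Hlam. exact Hmu.
      * intros j. rewrite (fsum_skip k p) by lia. rewrite Nat.eqb_refl.
        rewrite (fsum_ext k _ (fun i => mu i * v (sig_ p i) j)).
        2:{ intros i Hi. fold (sig_ p i). rewrite Hlam. reflexivity. }
        specialize (Hs j). unfold w in Hs.
        rewrite (fsum_ext k _ (fun i => mu i * v (sig_ p i) j + (- (mu i * c i)) * v p j)) in Hs
          by (intros; ring).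
        rewrite fsum_plus in Hs.
        rewrite (fsum_ext k (fun i => - (mu i * c i) * v p j) (fun i => v p j * (- (mu i * c i))))
          in Hs by (intros; ring).
        rewrite fsum_scal in Hs.
        rewrite (fsum_ext k (fun i => - (mu i * c i)) (fun i => -1 * (mu i * c i))) in Hs
          by (intros; ring).
        rewrite fsum_scal in Hs. unfold L. lra.
    + destruct (IH k v ltac:(lia)) as [lam H].
      { intros i j Hi Hj. destruct (Nat.eq_dec j d) as [->|Hjd].
        - destruct (Req_dec (v i d) 0) as [E|E]; auto. exfalso. apply Hno. exists i. auto.
        - apply Hv; auto; lia. }
      exists lam. exact H.
Qed.

Lemma no_big : forall d (x : nat -> nat -> R),
  (forall i, (i < S (S d))%nat -> in_Rd d (x i)) ->
  (forall i k, (i < S (S d))%nat -> (k < S (S d))%nat -> i <> k ->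
      sumsq d (midpoint (x i) (x k)) = 1) ->
  (forall i, (i < S (S d))%nat -> sumsq d (x i) > 1) -> False.
Proof.
  intros d x Hin Hmid Hgt.
  set (n := S (S d)).
  set (a := fun i => fsum d (fun j => x i j * x i j)).
  set (ip := fun i k => fsum d (fun j => x i j * x k j)).
  assert (Hip : forall i k, (i < n)%nat -> (k < n)%nat ->
     ip i k = 2 - (a i + a k)/2 + (if (i =? k)%nat then 2 * a i - 2 else 0)).
  { intros i k Hi Hk. destruct (Nat.eq_dec i k) as [->|Hne].
    - rewrite Nat.eqb_refl. unfold ip, a. cbv beta. lra.
    - assert (E: (i =? k)%nat = false) by (apply Nat.eqb_neq; auto). rewrite E.
      specialize (Hmid i k Hi Hk Hne). rewrite sumsq_fsum in Hmid.
      unfold midpoint in Hmid.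
      rewrite (fsum_ext d _ (fun j => (/4) * ((x i j * x i j + x k j * x k j) + 2 * (x i j * x k j)))) in Hmid
        by (intros; field).
      rewrite fsum_scal, fsum_plus, fsum_plus, fsum_scal in Hmid.
      unfold ip, a. cbv beta. lra. }
  destruct (dep d (S d) (fun i j => x i j - x (S d) j) ltac:(lia)) as [mu [[q [Hq Hmu]] Hs]].
  { intros i j Hi Hj. rewrite (Hin i) by lia. rewrite (Hin (S d)) by lia. ring. }
  set (lam := fun i => if (i <? S d)%nat then mu i else - fsum (S d) mu).
  assert (Hlt : forall i, (i < S d)%nat -> lam i = mu i).
  { intros i Hi. unfold lam. assert (E: (i <? S d)%nat = true) by (apply Nat.ltb_lt; lia).
    rewrite E. reflexivity. }
  assert (HSd : lam (S d) = - fsum (S d) mu).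
  { unfold lam. rewrite Nat.ltb_irrefl. reflexivity. }
  assert (Hsl : fsum n lam = 0).
  { unfold n. cbn [fsum]. change (fsum d lam + lam d) with (fsum (S d) lam).
    rewrite (fsum_ext (S d) lam mu Hlt). rewrite HSd. ring. }
  assert (Hcomb : forall j, fsum n (fun i => lam i * x i j) = 0).
  { intros j. unfold n. change (fsum (S (S d)) (fun i => lam i * x i j)) with
      (fsum (S d) (fun i => lam i * x i j) + lam (S d) * x (S d) j).
    rewrite (fsum_ext (S d) _ (fun i => mu i * x i j)) by (intros; rewrite Hlt; auto).
    rewrite HSd. specialize (Hs j).
    rewrite (fsum_ext (S d) _ (fun i => mu i * x i j + x (S d) j * (-1 * mu i))) in Hs
      by (intros; ring).
    rewrite fsum_plus, fsum_scal, fsum_scal in Hs. lra. }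
  set (B := fsum n (fun k => lam k * a k)).
  assert (HQ : 0 = fsum n (fun i => lam i * lam i * (2 * a i - 2))).
  { transitivity (fsum d (fun j => fsum n (fun i => lam i * x i j) * fsum n (fun i => lam i * x i j))).
    { symmetry. apply fsum_0. intros j _. rewrite Hcomb. ring. }
    rewrite (fsum_ext d _ (fun j => fsum n (fun i => fsum n (fun k => (lam i * lam k) * (x i j * x k j)))))
      by (intros; rewrite fsum_mul; apply fsum_ext; intros; apply fsum_ext; intros; ring).
    rewrite <- fsum_swap.
    rewrite (fsum_ext n _ (fun i => fsum n (fun k => (lam i * lam k) * ip i k))).
    2:{ intros i Hi. rewrite <- fsum_swap. apply fsum_ext. intros k Hk. unfold ip.
        rewrite fsum_scal. reflexivity. }
    rewrite (fsum_ext n _ (fun i => (- B / 2) * lam i + lam i * lam i * (2 * a i - 2))).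
    { rewrite fsum_plus, fsum_scal, Hsl. ring. }
    intros i Hi.
    rewrite (fsum_ext n _ (fun k => ((lam i * (2 - a i / 2)) * lam k + (- lam i / 2) * (lam k * a k))
              + (if (i =? k)%nat then lam i * lam i * (2 * a i - 2) else 0))).
    2:{ intros k Hk. rewrite Hip by auto. destruct (Nat.eqb_spec i k) as [->|_]; field. }
    rewrite fsum_delta by auto. rewrite fsum_plus, fsum_scal, fsum_scal, Hsl. fold B. unfold Rdiv. ring. }
  assert (Hpos : 0 < fsum n (fun i => lam i * lam i * (2 * a i - 2))).
  { apply (fsum_pos n _ q).
    - intros i Hi. assert (a i > 1) by (unfold a; rewrite <- sumsq_fsum; apply Hgt; auto).
      assert (0 <= lam i * lam i) by nra. nra.
    - unfold n; lia.
    - rewrite Hlt by auto. assert (a q > 1) by (unfold a; rewrite <- sumsq_fsum; apply Hgt; lia).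
      assert (0 < mu q * mu q) by nra. nra. }
  lra.
Qed.

Lemma sumsq_nonneg d y : 0 <= sumsq d y.
Proof. rewrite sumsq_fsum. apply fsum_nonneg. intros. nra. Qed.

Lemma norm_eq1 d y : norm2 d y = 1 -> sumsq d y = 1.
Proof. unfold norm2. intros H. rewrite <- (sqrt_sqrt (sumsq d y)) by apply sumsq_nonneg.
  rewrite H. ring. Qed.

Lemma norm_gt1 d y : norm2 d y > 1 -> sumsq d y > 1.
Proof. unfold norm2. intros H. destruct (Rle_lt_dec (sumsq d y) 1) as [h|h]; auto.
  apply sqrt_le_1_alt in h. rewrite sqrt_1 in h. lra. Qed.

Lemma mset_bound d (Ss : (nat -> R) -> Prop) : is_Mset d Ss ->
  forall l, NoDup l -> (forall x, In x l -> Ss x) -> (length l <= S d)%nat.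
Proof.
  intros [H1 [H2 H3]] l Hnd Hl.
  destruct (Nat.le_gt_cases (length l) (S d)) as [h|h]; auto. exfalso.
  set (x := fun i => nth i l (fun _ : nat => 0)).
  apply (no_big d x).
  - intros i Hi. apply H1, Hl. apply nth_In. lia.
  - intros i k Hi Hk Hne. apply norm_eq1. apply H2; try (apply Hl, nth_In; lia).
    intros E. apply Hne. apply (proj1 (NoDup_nth l (fun _ => 0)) Hnd); auto; lia.
  - intros i Hi. apply norm_gt1. apply H3, Hl, nth_In. lia.
Qed.

Lemma enum_exists {A : Type} (P : A -> Prop) (N : nat) :
  (forall l, NoDup l -> (forall x, In x l -> P x) -> (length l <= N)%nat) ->
  exists l, NoDup l /\ (forall x, P x <-> In x l) /\ (length l <= N)%nat.
Proof.
  intros Hb.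
  assert (Hm : forall m, (exists l, NoDup l /\ (forall x, In x l -> P x) /\ length l = m) \/
                 (exists l, NoDup l /\ (forall x, P x <-> In x l) /\ (length l <= N)%nat)).
  { induction m as [|m IH].
    - left. exists nil. repeat split; auto. constructor. intros x [].
    - destruct IH as [[l [Hnd [Hin Hlen]]]|R]; [|right; exact R].
      destruct (classic (exists x, P x /\ ~ In x l)) as [[x [Px Nx]]|Hno].
      + left. exists (x :: l). repeat split.
        * constructor; auto.
        * intros y [->|Hy]; auto.
        * simpl; lia.
      + right. exists l. repeat split; auto.
        intros Px. destruct (classic (In x l)) as [h|h]; auto. exfalso. apply Hno. eauto. }
  destruct (Hm (S N)) as [[l [Hnd [Hin Hlen]]]|R]; auto.
  specialize (Hb l Hnd Hin). lia.
Qed.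

Lemma fsum_const n c : fsum n (fun _ => c) = INR n * c.
Proof. induction n; simpl fsum; [simpl; ring|]. rewrite IHn, S_INR. ring. Qed.

Lemma norm_of_gt d y : sumsq d y > 1 -> norm2 d y > 1.
Proof. intros H. unfold norm2. rewrite <- sqrt_1. apply sqrt_lt_1_alt. lra. Qed.

Lemma norm_of_eq d y : sumsq d y = 1 -> norm2 d y = 1.
Proof. intros H. unfold norm2. rewrite H. apply sqrt_1. Qed.

Lemma mid_comm_sumsq d x y : sumsq d (midpoint x y) = sumsq d (midpoint y x).
Proof. rewrite !sumsq_fsum. apply fsum_ext. intros. unfold midpoint. field. Qed.

Lemma NoDup_map_on {A B : Type} (f : A -> B) (l : list A) :
  (forall x y, In x l -> In y l -> f x = f y -> x = y) -> NoDup l -> NoDup (map f l).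
Proof.
  induction l as [|a l IH]; intros Hi Hn; simpl; [constructor|].
  inversion Hn; subst. constructor.
  - intros Hin. apply in_map_iff in Hin. destruct Hin as [y [Hy Hyl]].
    assert (y = a) by (apply Hi; simpl; auto). subst. contradiction.
  - apply IH; auto. intros; apply Hi; simpl; auto.
Qed.

Section Cons.
Variable d : nat.
Hypothesis hd : (1 <= d)%nat.
Definition D := INR d.
Definition s2 := sqrt 2.
Definition t2 := sqrt (2 + 2 * D).
Definition be := (- s2 - t2) / D.
Definition pt (i : nat) : nat -> R := fun j =>
  if (j <? d)%nat then (if (i =? d)%nat then be else if (j =? i)%nat then s2 else 0) else 0.

Lemma D_ge1 : 1 <= D.
Proof. unfold D. apply (le_INR 1 d) in hd. simpl in hd. lra. Qed.
Lemma s2sq : s2 * s2 = 2. Proof. unfold s2. apply sqrt_sqrt. lra. Qed.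
Lemma t2sq : t2 * t2 = 2 + 2 * D. Proof. unfold t2. apply sqrt_sqrt. pose proof D_ge1. lra. Qed.
Lemma s2pos : 0 < s2. Proof. unfold s2. apply sqrt_lt_R0. lra. Qed.
Lemma t2pos : 0 < t2. Proof. unfold t2. apply sqrt_lt_R0. pose proof D_ge1. lra. Qed.

Lemma beD : be * D = - s2 - t2.
Proof. unfold be. field. pose proof D_ge1. lra. Qed.

Lemma E1 : 2 * s2 * be + D * be * be = 2.
Proof.
  pose proof D_ge1. pose proof s2sq. pose proof t2sq. pose proof beD.
  assert (H3 : (2 * s2 * be + D * be * be - 2) * D = 0).
  { replace ((2 * s2 * be + D * be * be - 2) * D) with (2 * s2 * (be * D) + (be * D) * (be * D) - 2 * D) by ring.
    rewrite beD. nra. }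
  apply Rmult_integral in H3. destruct H3; lra.
Qed.

Lemma E2 : D * be * be > 1.
Proof.
  pose proof D_ge1. pose proof s2pos. pose proof t2pos. pose proof t2sq. pose proof beD.
  assert (H5 : (D * be * be - 1) * D > 0).
  { replace ((D * be * be - 1) * D) with ((be * D) * (be * D) - D) by ring. rewrite beD. nra. }
  nra.
Qed.

Lemma be_neg : be < 0.
Proof. pose proof D_ge1. pose proof s2pos. pose proof t2pos. pose proof beD. nra. Qed.

Lemma pt_lt i j : (j < d)%nat -> pt i j = if (i =? d)%nat then be else if (j =? i)%nat then s2 else 0.
Proof. intros H. unfold pt. assert (E: (j <? d)%nat = true) by (apply Nat.ltb_lt; lia). rewrite E. auto. Qed.

Lemma pt_in i : in_Rd d (pt i).
Proof. intros j Hj. unfold pt. assert (E: (j <? d)%nat = false) by (apply Nat.ltb_ge; lia). rewrite E. auto. Qed.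

Lemma sumsq_pt_small i : (i < d)%nat -> sumsq d (pt i) = 2.
Proof.
  intros Hi. rewrite sumsq_fsum.
  rewrite (fsum_ext d _ (fun j => 0 + (if (i =? j)%nat then 2 else 0))).
  - rewrite fsum_delta by auto. rewrite fsum_const. ring.
  - intros j Hj. rewrite pt_lt by auto.
    assert (E: (i =? d)%nat = false) by (apply Nat.eqb_neq; lia). rewrite E.
    rewrite (Nat.eqb_sym j i). destruct (i =? j)%nat; [rewrite s2sq|]; ring.
Qed.

Lemma sumsq_pt_d : sumsq d (pt d) = D * be * be.
Proof.
  rewrite sumsq_fsum. rewrite (fsum_ext d _ (fun _ => be * be)).
  - rewrite fsum_const. fold D. ring.
  - intros j Hj. rewrite pt_lt by auto. rewrite Nat.eqb_refl. ring.
Qed.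

Lemma mid_small i k : (i < d)%nat -> (k < d)%nat -> i <> k -> sumsq d (midpoint (pt i) (pt k)) = 1.
Proof.
  intros Hi Hk Hne. rewrite sumsq_fsum.
  rewrite (fsum_ext d _ (fun j => (0 + (if (i =? j)%nat then /2 else 0)) + (if (k =? j)%nat then /2 else 0))).
  - rewrite fsum_delta, fsum_delta by auto. rewrite fsum_const. field.
  - intros j Hj. unfold midpoint. rewrite !pt_lt by auto.
    assert (E: (i =? d)%nat = false) by (apply Nat.eqb_neq; lia). rewrite E.
    assert (E': (k =? d)%nat = false) by (apply Nat.eqb_neq; lia). rewrite E'.
    rewrite (Nat.eqb_sym j i), (Nat.eqb_sym j k).
    pose proof s2sq.
    destruct (Nat.eqb_spec i j); destruct (Nat.eqb_spec k j); try lia; field_simplify; try lra.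
Qed.

Lemma mid_big i : (i < d)%nat -> sumsq d (midpoint (pt i) (pt d)) = 1.
Proof.
  intros Hi. rewrite sumsq_fsum.
  rewrite (fsum_ext d _ (fun j => be * be / 4 + (if (i =? j)%nat then (s2 * s2 + 2 * s2 * be) / 4 else 0))).
  - rewrite fsum_delta by auto. rewrite fsum_const. fold D. pose proof E1. pose proof s2sq. nra.
  - intros j Hj. unfold midpoint. rewrite !pt_lt by auto.
    assert (E: (i =? d)%nat = false) by (apply Nat.eqb_neq; lia). rewrite E, Nat.eqb_refl.
    rewrite (Nat.eqb_sym j i). destruct (i =? j)%nat; field.
Qed.

Lemma pt_inj i k : (i < S d)%nat -> (k < S d)%nat -> pt i = pt k -> i = k.
Proof.
  intros Hi Hk H. destruct (Nat.eq_dec i k) as [|Hne]; auto. exfalso.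
  pose proof be_neg. pose proof s2pos.
  assert (Hc : forall a b, (a < d)%nat -> a <> b -> (b < S d)%nat -> pt a <> pt b).
  { intros a b Ha Hab Hb E. apply (f_equal (fun f => f a)) in E.
    rewrite !pt_lt in E by auto.
    assert (E1: (a =? d)%nat = false) by (apply Nat.eqb_neq; lia). rewrite E1, Nat.eqb_refl in E.
    destruct (Nat.eqb_spec b d); [lra|].
    assert (E2: (a =? b)%nat = false) by (apply Nat.eqb_neq; lia). rewrite E2 in E. lra. }
  destruct (Nat.lt_ge_cases i d).
  - exact (Hc i k H2 Hne Hk H).
  - assert (k < d)%nat by lia. apply (Hc k i H3 (not_eq_sym Hne) Hi). auto.
Qed.

Lemma construction : exists l : list (nat -> R),
      NoDup l /\ length l = S d /\ is_Mset d (fun x => In x l).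
Proof.
  exists (map pt (seq 0 (S d))). split; [|split].
  - apply NoDup_map_on; [|apply seq_NoDup].
    intros x y Hx Hy. apply in_seq in Hx. apply in_seq in Hy. apply pt_inj; lia.
  - rewrite length_map, length_seq. reflexivity.
  - assert (Hl : forall x, In x (map pt (seq 0 (S d))) -> exists i, (i < S d)%nat /\ x = pt i).
    { intros x Hx. apply in_map_iff in Hx. destruct Hx as [i [<- Hi]]. apply in_seq in Hi.
      exists i. split; [lia|auto]. }
    split; [|split].
    + intros x Hx. destruct (Hl x Hx) as [i [_ ->]]. apply pt_in.
    + intros x y Hx Hy Hxy. destruct (Hl x Hx) as [i [Hi ->]]. destruct (Hl y Hy) as [k [Hk ->]].
      assert (i <> k) by (intros ->; auto).
      apply norm_of_eq.
      destruct (Nat.lt_ge_cases i d); destruct (Nat.lt_ge_cases k d).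
      * apply mid_small; auto.
      * assert (k = d) by lia. subst. apply mid_big; auto.
      * assert (i = d) by lia. subst. rewrite mid_comm_sumsq. apply mid_big; auto.
      * lia.
    + intros x Hx. destruct (Hl x Hx) as [i [Hi ->]]. apply norm_of_gt.
      destruct (Nat.lt_ge_cases i d).
      * rewrite sumsq_pt_small by auto. lra.
      * assert (i = d) by lia. subst. rewrite sumsq_pt_d. apply E2.
Qed.
End Cons.

Theorem theorem6 (d : nat) (hd : (1 <= d)%nat) :
  (exists l : list (nat -> R),
      NoDup l /\ length l = S d /\ is_Mset d (fun x => In x l)) /\
  (forall Sset : (nat -> R) -> Prop, is_Mset d Sset ->
      exists l : list (nat -> R),
        NoDup l /\ (forall x, Sset x <-> In x l) /\ (length l <= S d)%nat).
Proof.
  split.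
  - apply construction. exact hd.
  - intros Ss HS. apply enum_exists. apply mset_bound. exact HS.
Qed.
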